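(* Let $\langle D,E,e,\varepsilon\rangle$ be a restricted Priestley duality between a variety $\mathcal A$ and a category $\mathcal X$. (1) For $\mathbb X_1,\mathbb X_2\in\mathcal X$, the underlying Priestley space of their coproduct in $\mathcal X$ is isomorphic to the disjoint union of their underlying Priestley spaces: $(\mathbb X_1\sqcup\mathbb X_2)^\flat\cong\mathbb X_1^\flat\,\dot\cup\,\mathbb X_2^\flat$ via the natural map from $\mathbb X_1^\flat\,\dot\cup\,\mathbb X_2^\flat$ to $(\mathbb X_1\sqcup\mathbb X_2)^\flat$. (2) Let $\phi_1\colon\mathbb X_1\to\mathbb Y$ and $\phi_2\colon\mathbb X_2\to\mathbb Y$ be $\mathcal X$-morphisms. If $\phi_1$ and $\phi_2$ are $\mathcal P$-embeddings and $\mathbb Y^\flat=\phi_1^\flat(\mathbb X_1^\flat)\,\dot\cup\,\phi_2^\flat(\mathbb X_2^\flat)$, then $\mathbb Y$ with the morphisms $\phi_1,\phi_2$ is a coproduct of $\mathbb X_1$ and $\mathbb X_2$ in $\mathcal X$.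
   Context: $\mathcal D$: bounded distributive lattices; $\mathcal P$: Priestley spaces. Priestley duality: $H(\mathbf L)=\mathcal D(\mathbf L,\mathbf 2)$, $K(\mathbb X)=\mathcal P(\mathbb X,\mathbbm 2)$, morphisms by precomposition, unit and counit by evaluation. A restricted Priestley duality $\langle D,E,e,\varepsilon\rangle$: $\mathcal A$ a variety with a term reduct in $\mathcal D$ and forgetful functor ${}^\flat\colon\mathcal A\to\mathcal D$; $\mathcal X$ a category with functor ${}^\flat\colon\mathcal X\to\mathcal P$; $D,E$ a dual equivalence with unit $e$ and counit $\varepsilon$ such that ${}^\flat\circ D=H\circ{}^\flat$, ${}^\flat\circ E=K\circ{}^\flat$, $e_{\mathbf A}^\flat=e_{\mathbf A^\flat}$, $\varepsilon_{\mathbb X}^\flat=\varepsilon_{\mathbb X^\flat}$. A morphism $\phi$ of $\mathcal X$ is a $\mathcal P$-embedding if $\phi^\flat$ is an embedding of Priestley spaces. The disjoint union $\dot\cup$ of Priestley spaces is the disjoint union of the sets with the disjoint-union order (no comparabilities between the two parts) and sum topology; $\mathbb Y^\flat=\phi_1^\flat(\mathbb X_1^\flat)\,\dot\cup\,\phi_2^\flat(\mathbb X_2^\flat)$ means the two images are disjoint, cover $\mathbb Y^\flat$, and no element of one is comparable to one of the other. *)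

(* Defs.v *)
From Stdlib Require Import List FunctionalExtensionality PropExtensionality.



Record Signature := { sop : Type; sar : sop -> nat }.

Inductive term (Sg : Signature) (V : Type) : Type :=
| tvar : V -> term Sg V
| tapp : forall o : sop Sg, ({i : nat | i < @sar Sg o} -> term Sg V) -> term Sg V.
Arguments tvar {Sg V} _.
Arguments tapp {Sg V} o _.

Record Alg (Sg : Signature) := {
  acar :> Type;
  aop : forall o : sop Sg, ({i : nat | i < @sar Sg o} -> acar) -> acar }.
Arguments acar {Sg} _.
Arguments aop {Sg} _ _ _.

Fixpoint teval (Sg : Signature) (A : Alg Sg) (V : Type) (v : V -> acar A)
  (t : term Sg V) : acar A :=
  match t with
  | tvar x => v x
  | tapp o args => aop A o (fun i => teval Sg A V v (args i))
  end.
Arguments teval {Sg} A {V} v t.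

(* A variety: the class of algebras of a signature satisfying a set of
   identities (in countably many variables). *)
Record Variety := {
  vsig : Signature;
  veq : term vsig nat -> term vsig nat -> Prop }.

Definition models (K : Variety) (A : Alg (vsig K)) : Prop :=
  forall l r, veq K l r -> forall v : nat -> acar A, teval A v l = teval A v r.

Definition vobj (K : Variety) := { A : Alg (vsig K) | models K A }.


Definition is_alg_hom (Sg : Signature) (A B : Alg Sg) (f : acar A -> acar B) :=
  forall (o : sop Sg) (args : {i : nat | i < @sar Sg o} -> acar A),
    f (aop A o args) = aop B o (fun i => f (args i)).
Arguments is_alg_hom {Sg A B} f.

Record AHom (Sg : Signature) (A B : Alg Sg) := {
  ahfun :> acar A -> acar B;
  ahom : is_alg_hom ahfun }.
Arguments AHom {Sg} A B.
Arguments ahfun {Sg A B} _ _.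
Arguments ahom {Sg A B} _ _ _.
Arguments Build_AHom {Sg A B} _ _.

Definition homA (K : Variety) (A B : vobj K) := AHom (proj1_sig A) (proj1_sig B).
Arguments homA {K} A B.

Definition aid (K : Variety) (A : vobj K) : homA A A :=
  @Build_AHom _ (proj1_sig A) (proj1_sig A) (fun x => x) (fun o args => eq_refl).
Arguments aid {K} A.

Lemma alg_hom_comp (Sg : Signature) (A B C : Alg Sg) (g : AHom B C) (f : AHom A B) :
  is_alg_hom (fun x => g (f x)).
Proof. intros o args. rewrite (ahom f), (ahom g). reflexivity. Qed.

Definition acomp (K : Variety) (A B C : vobj K) (g : homA B C) (f : homA A B)
  : homA A C := Build_AHom _ (alg_hom_comp _ _ _ _ g f).
Arguments acomp {K A B C} g f.

Record PreBDL := {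
  bcar :> Type;
  bmeet : bcar -> bcar -> bcar;
  bjoin : bcar -> bcar -> bcar;
  bbot : bcar;
  btop : bcar }.

Definition is_bdl (L : PreBDL) : Prop :=
  (forall x y z, bmeet L x (bmeet L y z) = bmeet L (bmeet L x y) z) /\
  (forall x y z, bjoin L x (bjoin L y z) = bjoin L (bjoin L x y) z) /\
  (forall x y, bmeet L x y = bmeet L y x) /\
  (forall x y, bjoin L x y = bjoin L y x) /\
  (forall x y, bmeet L x (bjoin L x y) = x) /\
  (forall x y, bjoin L x (bmeet L x y) = x) /\
  (forall x y z, bmeet L x (bjoin L y z) = bjoin L (bmeet L x y) (bmeet L x z)) /\
  (forall x, bjoin L x (bbot L) = x) /\
  (forall x, bmeet L x (btop L) = x).

Definition bdl_hom (L M : PreBDL) (f : bcar L -> bcar M) : Prop :=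
  (forall x y, f (bmeet L x y) = bmeet M (f x) (f y)) /\
  (forall x y, f (bjoin L x y) = bjoin M (f x) (f y)) /\
  f (bbot L) = bbot M /\ f (btop L) = btop M.
Arguments bdl_hom {L M} f.

Record BHom (L M : PreBDL) := { bhfun :> bcar L -> bcar M; bhom : bdl_hom bhfun }.
Arguments bhfun {L M} _ _.
Arguments bhom {L M} _.

Definition two : PreBDL := @Build_PreBDL bool andb orb false true.

(* A variety with a term reduct in D: binary terms for meet/join (variable
   [false] is the first argument, [true] the second) and nullary (closed)
   terms for bottom/top. *)
Definition reduct (Sg : Signature) (tm tj : term Sg bool) (tb tt : term Sg Empty_set)
  (A : Alg Sg) : PreBDL :=
  {| bcar := acar A;
     bmeet := fun x y => teval A (fun b : bool => if b then y else x) tm;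
     bjoin := fun x y => teval A (fun b : bool => if b then y else x) tj;
     bbot := teval A (fun e : Empty_set => match e with end) tb;
     btop := teval A (fun e : Empty_set => match e with end) tt |}.
Arguments reduct {Sg} tm tj tb tt A.

Record DVariety := {
  dvar :> Variety;
  d_meet : term (vsig dvar) bool;
  d_join : term (vsig dvar) bool;
  d_bot : term (vsig dvar) Empty_set;
  d_top : term (vsig dvar) Empty_set;
  d_is_bdl : forall A : vobj dvar,
      is_bdl (reduct d_meet d_join d_bot d_top (proj1_sig A)) }.

Definition flatA (K : DVariety) (A : vobj K) : PreBDL :=
  reduct (d_meet K) (d_join K) (d_bot K) (d_top K) (proj1_sig A).
Arguments flatA {K} A.

Record PreSpace := {
  pcar :> Type;
  ple : pcar -> pcar -> Prop;
  popen : (pcar -> Prop) -> Prop }.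

Definition clopen (X : PreSpace) (U : pcar X -> Prop) :=
  popen X U /\ popen X (fun x => ~ U x).

Definition is_priestley (X : PreSpace) : Prop :=
  (forall x, ple X x x) /\
  (forall x y, ple X x y -> ple X y x -> x = y) /\
  (forall x y z, ple X x y -> ple X y z -> ple X x z) /\
  popen X (fun _ => True) /\ popen X (fun _ => False) /\
  (forall U V, popen X U -> popen X V -> popen X (fun x => U x /\ V x)) /\
  (forall F : (pcar X -> Prop) -> Prop, (forall U, F U -> popen X U) ->
     popen X (fun x => exists U, F U /\ U x)) /\
  (forall F : (pcar X -> Prop) -> Prop, (forall U, F U -> popen X U) ->
     (forall x, exists U, F U /\ U x) ->
     exists l : list (pcar X -> Prop),
       (forall U, In U l -> F U) /\ (forall x, exists U, In U l /\ U x)) /\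
  (forall x y, ~ ple X x y -> exists U, clopen X U /\
       (forall a b, ple X a b -> U a -> U b) /\ U x /\ ~ U y).

Record PSpace := { psp :> PreSpace; psp_ax : is_priestley psp }.

Definition monotone (X Y : PreSpace) (f : pcar X -> pcar Y) :=
  forall a b, ple X a b -> ple Y (f a) (f b).
Arguments monotone {X Y} f.

Definition continuous (X Y : PreSpace) (f : pcar X -> pcar Y) :=
  forall U, popen Y U -> popen X (fun x => U (f x)).
Arguments continuous {X Y} f.

(* embedding of Priestley spaces: an order embedding (continuity is part
   of being a Priestley morphism) *)
Definition p_embedding (X Y : PreSpace) (f : pcar X -> pcar Y) :=
  forall a b, ple Y (f a) (f b) <-> ple X a b.
Arguments p_embedding {X Y} f.

Definition pspace_iso (X Y : PreSpace) (f : pcar X -> pcar Y) :=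
  monotone f /\ continuous f /\
  exists g : pcar Y -> pcar X, monotone g /\ continuous g /\
    (forall x, g (f x) = x) /\ (forall y, f (g y) = y).
Arguments pspace_iso {X Y} f.

Definition dunion (X Y : PreSpace) : PreSpace :=
  {| pcar := (pcar X + pcar Y)%type;
     ple := fun u v => match u, v with
                       | inl a, inl b => ple X a b
                       | inr a, inr b => ple Y a b
                       | _, _ => False end;
     popen := fun U => popen X (fun a => U (inl a)) /\ popen Y (fun b => U (inr b)) |}.

Definition images_dunion (X1 X2 Y : PreSpace) (f1 : pcar X1 -> pcar Y)
  (f2 : pcar X2 -> pcar Y) : Prop :=
  (forall y, (exists a, f1 a = y) \/ (exists b, f2 b = y)) /\
  (forall a b, f1 a <> f2 b) /\
  (forall a b, ~ ple Y (f1 a) (f2 b) /\ ~ ple Y (f2 b) (f1 a)).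
Arguments images_dunion {X1 X2 Y} f1 f2.

(* H(L) = D(L,2): pointwise order, topology inherited from 2^L *)
Definition Hpre (L : PreBDL) : PreSpace :=
  {| pcar := BHom L two;
     ple := fun f g => forall a, bhfun f a = true -> bhfun g a = true;
     popen := fun U => forall f, U f ->
        exists l : list (bcar L * bool),
          (forall p, In p l -> bhfun f (fst p) = snd p) /\
          (forall g : BHom L two, (forall p, In p l -> bhfun g (fst p) = snd p) -> U g) |}.

(* K(X) = P(X,2): continuous order-preserving maps into the discrete 2 *)
Definition kcont (X : PreSpace) (f : pcar X -> bool) : Prop :=
  (forall a b, ple X a b -> f a = true -> f b = true) /\
  popen X (fun x => f x = true) /\ popen X (fun x => f x = false).
Arguments kcont {X} f.

Definition Kcar (X : PSpace) := { f : pcar X -> bool | kcont f }.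

Lemma open_ext (X : PreSpace) (U V : pcar X -> Prop) :
  (forall x, U x <-> V x) -> popen X U -> popen X V.
Proof.
  intros H HU. assert (E : U = V).
  { apply functional_extensionality; intro x; apply propositional_extensionality; auto. }
  rewrite <- E; exact HU.
Qed.

Lemma kcont_and (X : PSpace) (f g : pcar X -> bool) :
  kcont f -> kcont g -> kcont (fun x => andb (f x) (g x)).
Proof.
  destruct (psp_ax X) as (_ & _ & _ & _ & _ & Hi & Hu & _).
  intros (mf & tf & ff) (mg & tg & fg); split; [|split].
  - intros a b Hab. destruct (f a) eqn:Ea, (g a) eqn:Ga; simpl; intro H;
      try discriminate H.
    rewrite (mf a b Hab Ea), (mg a b Hab Ga). reflexivity.
  - eapply open_ext; [|exact (Hi _ _ tf tg)].
    intro x; cbv beta; destruct (f x), (g x); simpl; split; intro H;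
      repeat match goal with H : _ /\ _ |- _ => destruct H end;
      try split; try reflexivity; try discriminate; try assumption.
  - eapply open_ext;
      [|exact (Hu (fun U => U = (fun x => f x = false) \/ U = (fun x => g x = false))
                 ltac:(intros U [-> | ->]; assumption))].
    intro x; split.
    + intros [U [[-> | ->] HU]]; rewrite HU; [reflexivity|destruct (f x); reflexivity].
    + destruct (f x) eqn:Ef; simpl; intro H.
      * exists (fun x => g x = false); split; auto.
      * exists (fun x => f x = false); split; auto.
Qed.

Lemma kcont_or (X : PSpace) (f g : pcar X -> bool) :
  kcont f -> kcont g -> kcont (fun x => orb (f x) (g x)).
Proof.
  destruct (psp_ax X) as (_ & _ & _ & _ & _ & Hi & Hu & _).
  intros (mf & tf & ff) (mg & tg & fg); split; [|split].
  - intros a b Hab. destruct (f a) eqn:Ea, (g a) eqn:Ga; simpl; intro H;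
      try discriminate H.
    + rewrite (mf a b Hab Ea). reflexivity.
    + rewrite (mf a b Hab Ea). reflexivity.
    + rewrite (mg a b Hab Ga). destruct (f b); reflexivity.
  - eapply open_ext;
      [|exact (Hu (fun U => U = (fun x => f x = true) \/ U = (fun x => g x = true))
                 ltac:(intros U [-> | ->]; assumption))].
    intro x; split.
    + intros [U [[-> | ->] HU]]; rewrite HU; [reflexivity|destruct (f x); reflexivity].
    + destruct (f x) eqn:Ef; simpl; intro H.
      * exists (fun x => f x = true); split; auto.
      * exists (fun x => g x = true); split; auto.
  - eapply open_ext; [|exact (Hi _ _ ff fg)].
    intro x; cbv beta; destruct (f x), (g x); simpl; split; intro H;
      repeat match goal with H : _ /\ _ |- _ => destruct H end;
      try split; try reflexivity; try discriminate; try assumption.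
Qed.

Lemma kcont_const (X : PSpace) (b : bool) : @kcont X (fun _ => b).
Proof.
  destruct (psp_ax X) as (_ & _ & _ & HT & HF & _).
  split; [|split].
  - auto.
  - destruct b; [eapply open_ext; [|exact HT]|eapply open_ext; [|exact HF]];
      intro x; split; auto; try discriminate; intros [].
  - destruct b; [eapply open_ext; [|exact HF]|eapply open_ext; [|exact HT]];
      intro x; split; auto; try discriminate; intros [].
Qed.

Definition Kpre (X : PSpace) : PreBDL :=
  {| bcar := Kcar X;
     bmeet := fun f g => exist _ _ (kcont_and X _ _ (proj2_sig f) (proj2_sig g));
     bjoin := fun f g => exist _ _ (kcont_or X _ _ (proj2_sig f) (proj2_sig g));
     bbot := exist _ _ (kcont_const X false);
     btop := exist _ _ (kcont_const X true) |}.

Definition castB (L M : PreBDL) (h : L = M) (x : bcar L) : bcar M :=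
  match h in _ = M' return bcar M' with eq_refl => x end.
Arguments castB {L M} h x.

Definition castP (X Y : PreSpace) (h : X = Y) (x : pcar X) : pcar Y :=
  match h in _ = Y' return pcar Y' with eq_refl => x end.
Arguments castP {X Y} h x.

Record Cat := {
  cob :> Type;
  chom : cob -> cob -> Type;
  cid : forall a, chom a a;
  ccomp : forall a b c0, chom b c0 -> chom a b -> chom a c0;
  ccomp_id_l : forall a b (f : chom a b), ccomp a b b (cid b) f = f;
  ccomp_id_r : forall a b (f : chom a b), ccomp a a b f (cid a) = f;
  ccomp_assoc : forall a b c d (h : chom c d) (g : chom b c) (f : chom a b),
      ccomp a b d (ccomp b c d h g) f = ccomp a c d h (ccomp a b c g f) }.
Arguments chom {C} _ _ : rename.
Arguments cob : clear implicits.
Arguments cid {C} a : rename.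
Arguments ccomp {C a b d} _ _ : rename.

Definition is_coproduct (C : Cat) (x1 x2 y : cob C) (i1 : @chom C x1 y)
  (i2 : @chom C x2 y) : Prop :=
  forall z (f1 : @chom C x1 z) (f2 : @chom C x2 z),
    exists h : @chom C y z, ccomp h i1 = f1 /\ ccomp h i2 = f2 /\
      forall h' : @chom C y z, ccomp h' i1 = f1 -> ccomp h' i2 = f2 -> h' = h.
Arguments is_coproduct {C x1 x2 y} i1 i2.

(* a category X with a functor  flat : X -> P *)
Record PCat := {
  pcat :> Cat;
  fob : cob pcat -> PSpace;
  fmor : forall a b, @chom pcat a b -> pcar (fob a) -> pcar (fob b);
  fmor_mono : forall a b (f : @chom pcat a b), monotone (fmor a b f);
  fmor_cont : forall a b (f : @chom pcat a b), continuous (fmor a b f);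
  fmor_id : forall a x, fmor a a (cid a) x = x;
  fmor_comp : forall a b c (g : @chom pcat b c) (f : @chom pcat a b) x,
      fmor a c (ccomp g f) x = fmor b c g (fmor a b f x) }.
Arguments fob {P} _ : rename.
Arguments fmor {P a b} _ _ : rename.

Record RPD (K : DVariety) (X : PCat) := {
  D_ob : vobj K -> cob X;
  D_mor : forall A B : vobj K, homA A B -> chom (D_ob B) (D_ob A);
  E_ob : cob X -> vobj K;
  E_mor : forall x y : cob X, chom x y -> homA (E_ob y) (E_ob x);
  D_id : forall A, D_mor A A (aid A) = cid (D_ob A);
  D_comp : forall A B C (f : homA A B) (g : homA B C),
      D_mor A C (acomp g f) = ccomp (D_mor A B f) (D_mor B C g);
  E_id : forall x, E_mor x x (cid x) = aid (E_ob x);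
  E_comp : forall x y z (f : chom x y) (g : chom y z),
      E_mor x z (ccomp g f) = acomp (E_mor x y f) (E_mor y z g);
  unit : forall A, homA A (E_ob (D_ob A));
  unit_nat : forall A B (f : homA A B),
      acomp (E_mor _ _ (D_mor A B f)) (unit A) = acomp (unit B) f;
  unit_iso : forall A, exists g : homA (E_ob (D_ob A)) A,
      acomp g (unit A) = aid A /\ acomp (unit A) g = aid (E_ob (D_ob A));
  counit : forall x, chom x (D_ob (E_ob x));
  counit_nat : forall x y (g : chom x y),
      ccomp (D_mor _ _ (E_mor x y g)) (counit x) = ccomp (counit y) g;
  counit_iso : forall x, exists g : chom (D_ob (E_ob x)) x,
      ccomp g (counit x) = cid x /\ ccomp (counit x) g = cid (D_ob (E_ob x));
  (* flat o D = H o flat  (objects; on morphisms H is precomposition) *)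
  D_flat_ob : forall A, psp (fob (D_ob A)) = Hpre (flatA A);
  D_flat_mor : forall A B (f : homA A B) (x : pcar (fob (D_ob B))) (a : bcar (flatA A)),
      bhfun (castP (D_flat_ob A) (fmor (D_mor A B f) x)) a
      = bhfun (castP (D_flat_ob B) x) (ahfun f a);
  (* flat o E = K o flat  (objects; on morphisms K is precomposition) *)
  E_flat_ob : forall x, flatA (E_ob x) = Kpre (fob x);
  E_flat_mor : forall x y (g : chom x y) (a : bcar (flatA (E_ob y))) (p : pcar (fob x)),
      proj1_sig (castB (E_flat_ob x) (ahfun (E_mor x y g) a)) p
      = proj1_sig (castB (E_flat_ob y) a) (fmor g p);
  (* e_A^flat = e_{A^flat}  (evaluation a |-> (x |-> x(a))) *)
  unit_flat : forall A (a : bcar (flatA A)) (x : pcar (fob (D_ob A))),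
      proj1_sig (castB (E_flat_ob (D_ob A)) (ahfun (unit A) a)) x
      = bhfun (castP (D_flat_ob A) x) a;
  (* eps_X^flat = eps_{X^flat}  (evaluation p |-> (f |-> f(p))) *)
  counit_flat : forall x (p : pcar (fob x)) (a : bcar (flatA (E_ob x))),
      bhfun (castP (D_flat_ob (E_ob x)) (fmor (counit x) p)) a
      = proj1_sig (castB (E_flat_ob x) a) p }.

(* Main.v *)
Require Import Defs.
From Stdlib Require Import List FunctionalExtensionality PropExtensionality Classical ClassicalEpsilon ProofIrrelevance Bool.

Lemma open_inter_list (X : PSpace) (A : Type) (l : list A) (P : A -> pcar X -> Prop) :
  (forall a, In a l -> popen X (P a)) ->
  popen X (fun y => forall a, In a l -> P a y).
Proof.
  destruct (psp_ax X) as (_ & _ & _ & HT & HF & Hi & _).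
  induction l as [|a l IH]; intro H.
  - eapply open_ext; [|exact HT]. intro y; simpl; split; auto. intros _ a [].
  - eapply open_ext; [|exact (Hi _ _ (H a (or_introl eq_refl)) (IH (fun b hb => H b (or_intror hb))))].
    intro y; simpl; split.
    + intros [H1 H2] b [<-|hb]; auto.
    + intro H3; split; auto.
Qed.

Lemma hausdorff_clopen (Y : PSpace) (u y : pcar Y) : u <> y ->
  exists W, clopen Y W /\ W u /\ ~ W y.
Proof.
  destruct (psp_ax Y) as (_ & Has & _ & _ & _ & _ & _ & _ & Hsep).
  intro Hne. destruct (classic (ple Y u y)) as [Huy|Huy].
  - assert (Hyu : ~ ple Y y u) by (intro; apply Hne; apply Has; auto).
    destruct (Hsep _ _ Hyu) as (U & [HU1 HU2] & _ & Uy & Uu).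
    exists (fun x => ~ U x); split; [split|split]; auto.
    eapply open_ext; [|exact HU1]. intro x; split; [intros h h'; auto|apply NNPP].
  - destruct (Hsep _ _ Huy) as (U & HU & _ & Uu & Uy). exists U; auto.
Qed.

Lemma image_closed (X Y : PSpace) (phi : pcar X -> pcar Y) (A : pcar X -> Prop) :
  continuous phi -> popen X (fun x => ~ A x) ->
  popen Y (fun y => ~ exists a, A a /\ phi a = y).
Proof.
  intros Hc HA.
  destruct (psp_ax Y) as (_ & _ & _ & HT & HF & Hi & Hu & _).
  destruct (psp_ax X) as (_ & _ & _ & _ & _ & _ & _ & Hcpt & _).
  set (S := fun y => ~ exists a, A a /\ phi a = y).
  eapply open_ext; [|exact (Hu (fun V => popen Y V /\ forall z, V z -> S z) ltac:(intros U [h _]; exact h))].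
  intro y; split.
  - intros [V [[_ HV] Vy]]. exact (HV y Vy).
  - intro Sy.
    set (G := fun U : pcar X -> Prop => U = (fun x => ~ A x) \/
                 exists W, clopen Y W /\ ~ W y /\ U = (fun x => W (phi x))).
    assert (HG : forall U, G U -> popen X U).
    { intros U [->|(W & [HW1 _] & _ & ->)]; auto. }
    assert (Hcov : forall x, exists U, G U /\ U x).
    { intro x. destruct (classic (A x)) as [Ax|Ax].
      - assert (Hne : phi x <> y) by (intro e; apply Sy; eauto).
        destruct (hausdorff_clopen Y _ _ Hne) as (W & HW & Wx & Wy).
        exists (fun x => W (phi x)); split; [right; eauto|auto].
      - exists (fun x => ~ A x); split; [left|]; auto. }
    destruct (Hcpt G HG Hcov) as (l & Hl & Hlc).
    assert (Hch : forall U : pcar X -> Prop, {W : pcar Y -> Prop |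
        (clopen Y W /\ ~ W y /\ U = (fun x => W (phi x))) \/
        (~ (exists W, clopen Y W /\ ~ W y /\ U = (fun x => W (phi x))) /\ W = fun _ => False)}).
    { intro U. destruct (excluded_middle_informative
        (exists W, clopen Y W /\ ~ W y /\ U = (fun x => W (phi x)))) as [e|n].
      - destruct (constructive_indefinite_description _ e) as [W HW]. exists W; auto.
      - exists (fun _ => False); auto. }
    set (c := fun U => proj1_sig (Hch U)).
    exists (fun z => forall U, In U l -> ~ c U z). split; [split|].
    + apply open_inter_list. intros U _. unfold c; clear c; destruct (Hch U) as [W [(HW & H1 & H2)|(H1 & EW)]]; simpl; try rewrite EW.
      * apply HW.
      * eapply open_ext; [|exact HT]. intro; split; auto.
    + intros z Hz [a [Aa Ea]]. subst z. destruct (Hlc a) as (U & HUl & Ua).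
      destruct (Hl U HUl) as [->|(W & HW & Wy & ->)]; [exact (Ua Aa)|].
      apply (Hz _ HUl). unfold c in Hz |- *; clear c; destruct (Hch (fun x => W (phi x))) as [W' [(H1 & H2 & E)|(Hn & H3)]]; simpl.
      * change ((fun x => W' (phi x)) a). rewrite <- E. exact Ua.
      * exfalso; apply Hn; eauto.
    + intros U _. unfold c; clear c; destruct (Hch U) as [W [(H1 & Wy & H2)|(H1 & EW)]]; simpl; try rewrite EW; auto.
Qed.

Definition cop (X1 X2 Y : PreSpace) (f1 : pcar X1 -> pcar Y) (f2 : pcar X2 -> pcar Y)
  (u : pcar (dunion X1 X2)) : pcar Y :=
  match u with inl a => f1 a | inr b => f2 b end.

Lemma dunion_iso (X1 X2 Y : PSpace) (f1 : pcar X1 -> pcar Y) (f2 : pcar X2 -> pcar Y) :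
  continuous f1 -> continuous f2 -> p_embedding f1 -> p_embedding f2 ->
  images_dunion f1 f2 ->
  pspace_iso (X := dunion X1 X2) (Y := Y) (fun u => match u with inl a => f1 a | inr b => f2 b end).
Proof.
  intros c1 c2 e1 e2 (Hs & Hd & Hn).
  destruct (psp_ax X1) as (_ & As1 & _).
  destruct (psp_ax X2) as (_ & As2 & _).
  destruct (psp_ax Y) as (_ & _ & _ & _ & _ & Hi & _).
  set (psi := fun u : pcar (dunion X1 X2) => match u with inl a => f1 a | inr b => f2 b end).
  change (pspace_iso (X := dunion X1 X2) (Y := Y) psi).
  assert (Hinj : forall u v, psi u = psi v -> u = v).
  { intros [a|b] [a'|b'] E; simpl in E.
    - f_equal. apply As1; apply e1; rewrite E; apply e1, (proj1 (psp_ax X1)).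
    - destruct (Hd _ _ E).
    - destruct (Hd _ _ (eq_sym E)).
    - f_equal. apply As2; apply e2; rewrite E; apply e2, (proj1 (psp_ax X2)). }
  assert (Hex : forall y, exists u, psi u = y).
  { intro y. destruct (Hs y) as [[a Ha]|[b Hb]]; [exists (inl a)|exists (inr b)]; auto. }
  set (g := fun y => proj1_sig (constructive_indefinite_description _ (Hex y))).
  assert (Hg : forall y, psi (g y) = y).
  { intro y. unfold g. destruct (constructive_indefinite_description _ (Hex y)); auto. }
  assert (Hgp : forall u, g (psi u) = u) by (intro u; apply Hinj; apply Hg).
  assert (Hrefl : forall u v, ple Y (psi u) (psi v) -> ple (dunion X1 X2) u v).
  { intros [a|b] [a'|b'] H; simpl in *.
    - apply e1; auto.
    - apply (proj1 (Hn a b') H).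
    - apply (proj2 (Hn a' b) H).
    - apply e2; auto. }
  split; [|split].
  - intros [a|b] [a'|b'] H; simpl in *; try contradiction.
    + apply e1; auto.
    + apply e2; auto.
  - intros U HU. split; simpl; [apply c1|apply c2]; auto.
  - exists g. split; [|split; [|split]]; auto.
    + intros y y' H. apply Hrefl. rewrite !Hg. auto.
    + intros U [HU1 HU2].
      assert (HU1' : popen X1 (fun x => ~ ~ U (inl x))).
      { eapply open_ext; [|exact HU1]. intro; split; [auto|apply NNPP]. }
      assert (HU2' : popen X2 (fun x => ~ ~ U (inr x))).
      { eapply open_ext; [|exact HU2]. intro; split; [auto|apply NNPP]. }
      pose proof (image_closed X1 Y f1 _ c1 HU1') as O1.
      pose proof (image_closed X2 Y f2 _ c2 HU2') as O2.
      eapply open_ext; [|exact (Hi _ _ O1 O2)].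
      intro y. rewrite <- (Hg y). rewrite Hgp. destruct (g y) as [a|b]; simpl; split.
      * intros [H1 H2] . apply NNPP. intro Ha. apply H1. exists a; auto.
      * intro Ha; split.
        -- intros [a' [Ha' E]]. apply Ha'. assert (inl a' = inl a :> (pcar X1 + pcar X2)%type) as E'
             by (apply Hinj; exact E). injection E' as ->; auto.
        -- intros [b' [_ E]]. apply (Hd a b'). auto.
      * intros [H1 H2] . apply NNPP. intro Hb. apply H2. exists b; auto.
      * intro Hb; split.
        -- intros [a' [_ E]]. apply (Hd a' b). auto.
        -- intros [b' [Hb' E]]. apply Hb'. assert (inr b' = inr b :> (pcar X1 + pcar X2)%type) as E'
             by (apply Hinj; exact E). injection E' as ->; auto.
Qed.

Definition isoC (C : Cat) (a b : cob C) (f : @chom C a b) :=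
  exists g : @chom C b a, ccomp g f = cid a /\ ccomp f g = cid b.
Arguments isoC {C a b} f.

Lemma iso_comp (C : Cat) (a b c : cob C) (g : @chom C b c) (f : @chom C a b) :
  isoC f -> isoC g -> isoC (ccomp g f).
Proof.
  intros [f' [f1 f2]] [g' [g1 g2]]. exists (ccomp f' g'). split.
  - rewrite ccomp_assoc, <- (ccomp_assoc _ _ _ _ _ g' g f), g1, ccomp_id_l; auto.
  - rewrite ccomp_assoc, <- (ccomp_assoc _ _ _ _ _ f f' g'), f2, ccomp_id_l; auto.
Qed.

Lemma iso_inv (C : Cat) (a b : cob C) (f : @chom C a b) (g : @chom C b a) :
  ccomp g f = cid a -> ccomp f g = cid b -> isoC g.
Proof. intros h1 h2. exists f; auto. Qed.

Lemma iso_cancel (C : Cat) (a b c d : cob C) (h : @chom C a b) (u : @chom C b d)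
  (w : @chom C a c) (v : @chom C c d) :
  ccomp u h = ccomp v w -> isoC u -> isoC v -> isoC w -> isoC h.
Proof.
  intros E [u' [u1 u2]] Hv Hw.
  assert (h = ccomp u' (ccomp v w)) as ->.
  { rewrite <- E, <- ccomp_assoc, u1, ccomp_id_l. auto. }
  apply iso_comp; [apply iso_comp; auto|]. apply (iso_inv _ _ _ u); auto.
Qed.

Lemma coprod_transfer (C : Cat) (x1 x2 y y' : cob C) (i1 : @chom C x1 y) (i2 : @chom C x2 y)
  (t : @chom C y y') : is_coproduct i1 i2 -> isoC t -> is_coproduct (ccomp t i1) (ccomp t i2).
Proof.
  intros Hc [t' [t1 t2]] z f1 f2.
  destruct (Hc z f1 f2) as (h & h1 & h2 & hu).
  exists (ccomp h t'). split; [|split].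
  - rewrite <- ccomp_assoc, (ccomp_assoc _ _ _ _ _ h t' t), t1, ccomp_id_r; auto.
  - rewrite <- ccomp_assoc, (ccomp_assoc _ _ _ _ _ h t' t), t1, ccomp_id_r; auto.
  - intros h' e1 e2. rewrite <- ccomp_assoc in e1, e2.
    rewrite <- (hu _ e1 e2). rewrite ccomp_assoc, t2, ccomp_id_r; auto.
Qed.

Lemma coprod_unique (C : Cat) (x1 x2 y y' : cob C) (i1 : @chom C x1 y) (i2 : @chom C x2 y)
  (i1' : @chom C x1 y') (i2' : @chom C x2 y') :
  is_coproduct i1 i2 -> is_coproduct i1' i2' ->
  exists t : @chom C y y', isoC t /\ ccomp t i1 = i1' /\ ccomp t i2 = i2'.
Proof.
  intros H H'.
  destruct (H y' i1' i2') as (t & ta & tb & tu).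
  destruct (H' y i1 i2) as (s & sa & sb & su).
  exists t; split; auto. exists s. split.
  - destruct (H y i1 i2) as (r & _ & _ & ru).
    rewrite (ru (ccomp s t)), (ru (cid y)); auto; rewrite ?ccomp_id_l; auto;
      rewrite ccomp_assoc; [rewrite ta|rewrite tb]; auto.
  - destruct (H' y' i1' i2') as (r & _ & _ & ru).
    rewrite (ru (ccomp t s)), (ru (cid y')); auto; rewrite ?ccomp_id_l; auto;
      rewrite ccomp_assoc; [rewrite sa|rewrite sb]; auto.
Qed.

Lemma fmor_iso (P : PCat) (a b : cob P) (t : @chom P a b) : isoC t ->
  exists g : pcar (fob b) -> pcar (fob a), monotone g /\ continuous g /\
    (forall x, g (fmor t x) = x) /\ (forall y, fmor t (g y) = y).
Proof.
  intros [t' [t1 t2]]. exists (fmor t'). split; [apply fmor_mono|split; [apply fmor_cont|split]].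
  - intro x. rewrite <- fmor_comp, t1, fmor_id; auto.
  - intro x. rewrite <- fmor_comp, t2, fmor_id; auto.
Qed.

Lemma AHom_eq (Sg : Signature) (A B : Alg Sg) (f g : AHom A B) :
  (forall x, ahfun f x = ahfun g x) -> f = g.
Proof.
  destruct f as [f hf], g as [g hg]; simpl; intro E.
  assert (f = g) as <- by (apply functional_extensionality; auto).
  f_equal; apply proof_irrelevance.
Qed.

Lemma BHom_eq (L M : PreBDL) (f g : BHom L M) :
  (forall x, bhfun f x = bhfun g x) -> f = g.
Proof.
  destruct f as [f hf], g as [g hg]; simpl; intro E.
  assert (f = g) as <- by (apply functional_extensionality; auto).
  f_equal; apply proof_irrelevance.
Qed.

Lemma castB_inj (L M : PreBDL) (h : L = M) x y : castB h x = castB h y -> x = y.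
Proof. destruct h; auto. Qed.
Lemma castB_surj (L M : PreBDL) (h : L = M) y : exists x, castB h x = y.
Proof. destruct h; exists y; reflexivity. Qed.
Lemma castP_inj (X Y : PreSpace) (h : X = Y) x y : castP h x = castP h y -> x = y.
Proof. destruct h; auto. Qed.
Lemma castP_surj (X Y : PreSpace) (h : X = Y) y : exists x, castP h x = y.
Proof. destruct h; exists y; reflexivity. Qed.
Lemma castP_ple (X Y : PreSpace) (h : X = Y) x y : ple X x y <-> ple Y (castP h x) (castP h y).
Proof. destruct h; simpl; tauto. Qed.

Lemma bij_hom_iso (K : Variety) (A B : vobj K) (f : homA A B) :
  (forall x y, ahfun f x = ahfun f y -> x = y) -> (forall y, exists x, ahfun f x = y) ->
  exists g : homA B A, acomp g f = aid A /\ acomp f g = aid B.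
Proof.
  intros Hi Hs.
  set (g := fun y => proj1_sig (constructive_indefinite_description _ (Hs y))).
  assert (Hg : forall y, ahfun f (g y) = y).
  { intro y; unfold g; destruct (constructive_indefinite_description _ (Hs y)); auto. }
  assert (Hh : is_alg_hom (A := proj1_sig B) (B := proj1_sig A) g).
  { intros o args. apply Hi. rewrite Hg, (ahom f). f_equal.
    apply functional_extensionality; intro i; rewrite Hg; auto. }
  exists (Build_AHom g Hh). split; apply AHom_eq; simpl; auto.
Qed.

Lemma E_faithful (K : DVariety) (X : PCat) (R : RPD K X) (x y : cob X) (f g : @chom X x y) :
  E_mor _ _ R x y f = E_mor _ _ R x y g -> f = g.
Proof.
  intro E. destruct (counit_iso _ _ R y) as [c [c1 c2]].
  rewrite <- (ccomp_id_l _ _ _ f), <- (ccomp_id_l _ _ _ g), <- c1, !ccomp_assoc,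
    <- !counit_nat, E. reflexivity.
Qed.

Lemma D_iso (K : DVariety) (X : PCat) (R : RPD K X) (A B : vobj K) (f : homA A B) (g : homA B A) :
  acomp g f = aid A -> acomp f g = aid B -> isoC (D_mor _ _ R A B f).
Proof.
  intros h1 h2. exists (D_mor _ _ R B A g). split.
  - rewrite <- D_comp, h2, D_id; auto.
  - rewrite <- D_comp, h1, D_id; auto.
Qed.

Lemma iso_of_E_bij (K : DVariety) (X : PCat) (R : RPD K X) (x y : cob X) (h : @chom X x y) :
  (forall a b, ahfun (E_mor _ _ R x y h) a = ahfun (E_mor _ _ R x y h) b -> a = b) ->
  (forall b, exists a, ahfun (E_mor _ _ R x y h) a = b) -> isoC h.
Proof.
  intros Hi Hs. destruct (bij_hom_iso _ _ _ _ Hi Hs) as [k [k1 k2]].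
  apply (iso_cancel _ _ _ _ _ h (counit _ _ R y) (counit _ _ R x) (D_mor _ _ R _ _ (E_mor _ _ R x y h))).
  - symmetry; apply counit_nat.
  - destruct (counit_iso _ _ R y) as [c [c1 c2]]; exists c; auto.
  - eapply D_iso; eauto.
  - destruct (counit_iso _ _ R x) as [c [c1 c2]]; exists c; auto.
Qed.

Lemma sig_eq2 (A : Type) (P : A -> Prop) (u v : sig P) : proj1_sig u = proj1_sig v -> u = v.
Proof. destruct u, v; simpl; intros ->; f_equal; apply proof_irrelevance. Qed.

Lemma iso_of_flat_iso (K : DVariety) (X : PCat) (R : RPD K X) (x y : cob X) (h : @chom X x y) :
  pspace_iso (fmor h) -> isoC h.
Proof.
  intros (hm & hc & g & gm & gc & g1 & g2).
  apply (iso_of_E_bij _ _ R).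
  - intros a b E.
    apply (castB_inj _ _ (E_flat_ob _ _ R y)). apply sig_eq2.
    apply functional_extensionality; intro q. rewrite <- (g2 q), <- !E_flat_mor, E; auto.
  - intro b. set (f := castB (E_flat_ob _ _ R x) b).
    destruct f as [fx [fm [ft ff]]] eqn:Ef.
    assert (Hk : kcont (X := fob y) (fun q => fx (g q))).
    { split; [|split].
      - intros a a' H; apply fm; apply gm; auto.
      - apply (gc (fun p => fx p = true)); auto.
      - apply (gc (fun p => fx p = false)); auto. }
    destruct (castB_surj _ _ (E_flat_ob _ _ R y) (exist _ _ Hk)) as [a Ha].
    exists a. apply (castB_inj _ _ (E_flat_ob _ _ R x)). fold f. rewrite Ef.
    apply sig_eq2; simpl. apply functional_extensionality; intro p.
    rewrite E_flat_mor, Ha; simpl. rewrite g1; auto.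
Qed.

Definition prodAlg (Sg : Signature) (A B : Alg Sg) : Alg Sg :=
  {| acar := (acar A * acar B)%type;
     aop := fun o args => (aop A o (fun i => fst (args i)), aop B o (fun i => snd (args i))) |}.

Lemma teval_prod (Sg : Signature) (A B : Alg Sg) (V : Type) (v : V -> acar A * acar B) (t : term Sg V) :
  teval (prodAlg Sg A B) v t = (teval A (fun x => fst (v x)) t, teval B (fun x => snd (v x)) t).
Proof.
  induction t as [x|o args IH]; simpl; [destruct (v x); auto|].
  f_equal; f_equal; apply functional_extensionality; intro i; rewrite IH; auto.
Qed.

Lemma prod_models (K : Variety) (A B : vobj K) : models K (prodAlg _ (proj1_sig A) (proj1_sig B)).
Proof.
  intros l r E v. rewrite !teval_prod. f_equal; [apply (proj2_sig A)|apply (proj2_sig B)]; auto.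
Qed.

Definition prodV (K : Variety) (A B : vobj K) : vobj K := exist _ _ (prod_models K A B).

Definition pi1 (K : Variety) (A B : vobj K) : homA (prodV K A B) A :=
  @Build_AHom _ (prodAlg _ (proj1_sig A) (proj1_sig B)) (proj1_sig A) fst (fun o args => eq_refl).
Definition pi2 (K : Variety) (A B : vobj K) : homA (prodV K A B) B :=
  @Build_AHom _ (prodAlg _ (proj1_sig A) (proj1_sig B)) (proj1_sig B) snd (fun o args => eq_refl).

Lemma pair_hom (K : Variety) (A B C : vobj K) (f : homA C A) (g : homA C B) :
  is_alg_hom (A := proj1_sig C) (B := prodAlg _ (proj1_sig A) (proj1_sig B))
    (fun c => (ahfun f c, ahfun g c)).
Proof. intros o args. simpl. rewrite (ahom f), (ahom g). reflexivity. Qed.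

Definition pairH (K : Variety) (A B C : vobj K) (f : homA C A) (g : homA C B) : homA C (prodV K A B) :=
  Build_AHom _ (pair_hom K A B C f g).

Lemma hom_ap (Sg : Signature) (A B : Alg Sg) (f g : AHom A B) x : f = g -> ahfun f x = ahfun g x.
Proof. intros ->; auto. Qed.


Definition copO (K : DVariety) (X : PCat) (R : RPD K X) (x1 x2 : cob X) : cob X :=
  D_ob _ _ R (prodV K (E_ob _ _ R x1) (E_ob _ _ R x2)).

Definition j1 (K : DVariety) (X : PCat) (R : RPD K X) (x1 x2 : cob X) : @chom X x1 (copO K X R x1 x2) :=
  ccomp (D_mor _ _ R _ _ (pi1 K (E_ob _ _ R x1) (E_ob _ _ R x2))) (counit _ _ R x1).
Definition j2 (K : DVariety) (X : PCat) (R : RPD K X) (x1 x2 : cob X) : @chom X x2 (copO K X R x1 x2) :=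
  ccomp (D_mor _ _ R _ _ (pi2 K (E_ob _ _ R x1) (E_ob _ _ R x2))) (counit _ _ R x2).

Lemma iso_epi (C : Cat) (a b c : cob C) (e : @chom C a b) (f g : @chom C b c) :
  isoC e -> ccomp f e = ccomp g e -> f = g.
Proof.
  intros [e' [_ e2]] E. rewrite <- (ccomp_id_r _ _ _ f), <- (ccomp_id_r _ _ _ g), <- e2,
    <- !ccomp_assoc, E; auto.
Qed.

Lemma unit_inj (K : DVariety) (X : PCat) (R : RPD K X) (A : vobj K) a b :
  ahfun (unit _ _ R A) a = ahfun (unit _ _ R A) b -> a = b.
Proof.
  intro E. destruct (unit_iso _ _ R A) as [g [g1 _]].
  pose proof (hom_ap _ _ _ _ _ a g1) as Ha. pose proof (hom_ap _ _ _ _ _ b g1) as Hb.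
  simpl in Ha, Hb. rewrite <- Ha, <- Hb, E; auto.
Qed.

Lemma unit_surj (K : DVariety) (X : PCat) (R : RPD K X) (A : vobj K) b :
  exists a, ahfun (unit _ _ R A) a = b.
Proof.
  destruct (unit_iso _ _ R A) as [g [_ g2]]. exists (ahfun g b).
  exact (hom_ap _ _ _ _ _ b g2).
Qed.

Lemma cop_epi (K : DVariety) (X : PCat) (R : RPD K X) (x1 x2 z : cob X)
  (h h' : @chom X (copO K X R x1 x2) z) :
  ccomp h (j1 K X R x1 x2) = ccomp h' (j1 K X R x1 x2) ->
  ccomp h (j2 K X R x1 x2) = ccomp h' (j2 K X R x1 x2) -> h = h'.
Proof.
  unfold j1, j2, copO in *. rewrite <- !ccomp_assoc. intros E1 E2.
  assert (c1 : isoC (counit _ _ R x1)) by (destruct (counit_iso _ _ R x1) as [c [? ?]]; exists c; auto).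
  assert (c2 : isoC (counit _ _ R x2)) by (destruct (counit_iso _ _ R x2) as [c [? ?]]; exists c; auto).
  apply iso_epi in E1; auto. apply iso_epi in E2; auto.
  apply (f_equal (E_mor _ _ R _ _)) in E1, E2. rewrite !E_comp in E1, E2.
  apply (E_faithful _ _ R). apply AHom_eq. intro w.
  set (P := prodV K (E_ob _ _ R x1) (E_ob _ _ R x2)).
  destruct (unit_surj K X R P (ahfun (E_mor _ _ R _ _ h) w)) as [p Hp].
  destruct (unit_surj K X R P (ahfun (E_mor _ _ R _ _ h') w)) as [p' Hp'].
  etransitivity; [symmetry; exact Hp|]. etransitivity; [|exact Hp']. f_equal.
  pose proof (hom_ap _ _ _ _ _ w E1) as F1. pose proof (hom_ap _ _ _ _ _ w E2) as F2. simpl in F1, F2.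
  assert (G1 := eq_trans (f_equal _ Hp) (eq_trans F1 (f_equal _ (eq_sym Hp')))). clear F1. rename G1 into F1.
  assert (G2 := eq_trans (f_equal _ Hp) (eq_trans F2 (f_equal _ (eq_sym Hp')))). clear F2. rename G2 into F2.
  pose proof (hom_ap _ _ _ _ _ p (unit_nat _ _ R _ _ (pi1 K (E_ob _ _ R x1) (E_ob _ _ R x2)))) as U1.
  pose proof (hom_ap _ _ _ _ _ p' (unit_nat _ _ R _ _ (pi1 K (E_ob _ _ R x1) (E_ob _ _ R x2)))) as U1'.
  pose proof (hom_ap _ _ _ _ _ p (unit_nat _ _ R _ _ (pi2 K (E_ob _ _ R x1) (E_ob _ _ R x2)))) as U2.
  pose proof (hom_ap _ _ _ _ _ p' (unit_nat _ _ R _ _ (pi2 K (E_ob _ _ R x1) (E_ob _ _ R x2)))) as U2'.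
  simpl in U1, U1', U2, U2'.
  destruct p as [p1 p2], p' as [q1 q2]. f_equal.
  - apply (unit_inj K X R). simpl in *. rewrite <- U1, <- U1'. exact F1.
  - apply (unit_inj K X R). simpl in *. rewrite <- U2, <- U2'. exact F2.
Qed.

Lemma cop_is_coproduct (K : DVariety) (X : PCat) (R : RPD K X) (x1 x2 : cob X) :
  is_coproduct (j1 K X R x1 x2) (j2 K X R x1 x2).
Proof.
  intros z f1 f2.
  destruct (counit_iso _ _ R z) as [c [c1 c2]].
  set (h := ccomp c (D_mor _ _ R _ _ (pairH K (E_ob _ _ R x1) (E_ob _ _ R x2) _ (E_mor _ _ R _ _ f1) (E_mor _ _ R _ _ f2)))).
  assert (H1 : ccomp h (j1 K X R x1 x2) = f1).
  { unfold h, j1. rewrite !ccomp_assoc, <- (ccomp_assoc _ _ _ _ _ (D_mor _ _ R _ _ _)), <- D_comp.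
    assert (acomp (pi1 K (E_ob _ _ R x1) (E_ob _ _ R x2)) (pairH K (E_ob _ _ R x1) (E_ob _ _ R x2) _ (E_mor _ _ R _ _ f1) (E_mor _ _ R _ _ f2))
            = E_mor _ _ R _ _ f1) as -> by (apply AHom_eq; reflexivity).
    rewrite counit_nat, <- ccomp_assoc, c1, ccomp_id_l; auto. }
  assert (H2 : ccomp h (j2 K X R x1 x2) = f2).
  { unfold h, j2. rewrite !ccomp_assoc, <- (ccomp_assoc _ _ _ _ _ (D_mor _ _ R _ _ _)), <- D_comp.
    assert (acomp (pi2 K (E_ob _ _ R x1) (E_ob _ _ R x2)) (pairH K (E_ob _ _ R x1) (E_ob _ _ R x2) _ (E_mor _ _ R _ _ f1) (E_mor _ _ R _ _ f2))
            = E_mor _ _ R _ _ f2) as -> by (apply AHom_eq; reflexivity).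
    rewrite counit_nat, <- ccomp_assoc, c1, ccomp_id_l; auto. }
  exists h; split; [|split]; auto.
  intros h' e1 e2. clearbody h. apply cop_epi; [rewrite e1; symmetry; exact H1|rewrite e2; symmetry; exact H2].
Qed.


Lemma fp_meet (K : DVariety) (A1 A2 : vobj K) (u v : bcar (flatA (prodV K A1 A2))) :
  bmeet (flatA (prodV K A1 A2)) u v =
  (bmeet (flatA A1) (fst u) (fst v), bmeet (flatA A2) (snd u) (snd v)).
Proof.
  unfold flatA, reduct; simpl. rewrite teval_prod. f_equal; f_equal;
  apply functional_extensionality; intros []; auto.
Qed.
Lemma fp_join (K : DVariety) (A1 A2 : vobj K) (u v : bcar (flatA (prodV K A1 A2))) :
  bjoin (flatA (prodV K A1 A2)) u v =
  (bjoin (flatA A1) (fst u) (fst v), bjoin (flatA A2) (snd u) (snd v)).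
Proof.
  unfold flatA, reduct; simpl. rewrite teval_prod. f_equal; f_equal;
  apply functional_extensionality; intros []; auto.
Qed.
Lemma fp_bot (K : DVariety) (A1 A2 : vobj K) :
  bbot (flatA (prodV K A1 A2)) = (bbot (flatA A1), bbot (flatA A2)).
Proof.
  unfold flatA, reduct; simpl. rewrite teval_prod. f_equal; f_equal;
  apply functional_extensionality; intros [].
Qed.
Lemma fp_top (K : DVariety) (A1 A2 : vobj K) :
  btop (flatA (prodV K A1 A2)) = (btop (flatA A1), btop (flatA A2)).
Proof.
  unfold flatA, reduct; simpl. rewrite teval_prod. f_equal; f_equal;
  apply functional_extensionality; intros [].
Qed.

Lemma bdl_laws (K : DVariety) (A : vobj K) :
  (forall x, bmeet (flatA A) x (btop (flatA A)) = x) /\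
  (forall x, bjoin (flatA A) x (bbot (flatA A)) = x) /\
  (forall x, bmeet (flatA A) x (bbot (flatA A)) = bbot (flatA A)) /\
  (forall x, bjoin (flatA A) (bbot (flatA A)) x = x).
Proof.
  destruct (d_is_bdl K A) as (_ & _ & mc & jc & a1 & a2 & _ & jb & mt). fold (flatA A) in *.
  assert (jb' : forall x, bjoin (flatA A) (bbot (flatA A)) x = x) by (intro x; rewrite jc; auto).
  split; [|split; [|split]]; auto.
  intro x. rewrite mc. rewrite <- (a2 (bbot (flatA A)) x) at 2. rewrite jb'. auto.
Qed.

Lemma hom_tb (L : PreBDL) (x : BHom L two) :
  bhfun x (btop L) = true /\ bhfun x (bbot L) = false.
Proof. destruct (bhom x) as (_ & _ & b & t). split; auto. Qed.

Lemma split_hom1 (K : DVariety) (A1 A2 : vobj K) (h : BHom (flatA (prodV K A1 A2)) two) :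
  bhfun h (btop (flatA A1), bbot (flatA A2)) = true ->
  exists x : BHom (flatA A1) two, forall a, bhfun h a = bhfun x (fst a).
Proof.
  intro Ht. destruct (bhom h) as (hm & hj & hb & htop).
  destruct (bdl_laws K A1) as (m1 & j1 & mb1 & jb1).
  destruct (bdl_laws K A2) as (m2 & j2 & mb2 & jb2).
  set (f := fun a => bhfun h (a, bbot (flatA A2))).
  assert (Hf : bdl_hom (L := flatA A1) (M := two) f).
  { unfold f; split; [|split; [|split]].
    - intros a b. rewrite <- hm, fp_meet; cbn [fst snd]. rewrite mb2. auto.
    - intros a b. rewrite <- hj, fp_join; cbn [fst snd]. rewrite j2. auto.
    - cbv beta. rewrite <- hb. f_equal. exact (eq_sym (fp_bot K A1 A2)).
    - cbv beta. exact Ht. }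
  exists (Build_BHom (flatA A1) two f Hf). intros [a1 a2]; cbn [bhfun fst snd]. unfold f.
  rewrite <- (andb_true_r (bhfun h (a1, a2))). rewrite <- Ht.
  change (andb (bhfun h (a1, a2)) (bhfun h (btop (flatA A1), bbot (flatA A2))))
    with (bmeet two (bhfun h (a1, a2)) (bhfun h (btop (flatA A1), bbot (flatA A2)))).
  rewrite <- hm, fp_meet; cbn [fst snd]. rewrite m1, mb2. auto.
Qed.

Lemma split_hom2 (K : DVariety) (A1 A2 : vobj K) (h : BHom (flatA (prodV K A1 A2)) two) :
  bhfun h (bbot (flatA A1), btop (flatA A2)) = true ->
  exists x : BHom (flatA A2) two, forall a, bhfun h a = bhfun x (snd a).
Proof.
  intro Ht. destruct (bhom h) as (hm & hj & hb & htop).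
  destruct (bdl_laws K A1) as (m1 & j1 & mb1 & jb1).
  destruct (bdl_laws K A2) as (m2 & j2 & mb2 & jb2).
  set (f := fun a => bhfun h (bbot (flatA A1), a)).
  assert (Hf : bdl_hom (L := flatA A2) (M := two) f).
  { unfold f; split; [|split; [|split]].
    - intros a b. rewrite <- hm, fp_meet; cbn [fst snd]. rewrite mb1. auto.
    - intros a b. rewrite <- hj, fp_join; cbn [fst snd]. rewrite j1. auto.
    - cbv beta. rewrite <- hb. f_equal. exact (eq_sym (fp_bot K A1 A2)).
    - cbv beta. exact Ht. }
  exists (Build_BHom (flatA A2) two f Hf). intros [a1 a2]; cbn [bhfun fst snd]. unfold f.
  rewrite <- (andb_true_r (bhfun h (a1, a2))). rewrite <- Ht.
  change (andb (bhfun h (a1, a2)) (bhfun h (bbot (flatA A1), btop (flatA A2))))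
    with (bmeet two (bhfun h (a1, a2)) (bhfun h (bbot (flatA A1), btop (flatA A2)))).
  rewrite <- hm, fp_meet; cbn [fst snd]. rewrite m2, mb1. auto.
Qed.

Lemma split_hom (K : DVariety) (A1 A2 : vobj K) (h : BHom (flatA (prodV K A1 A2)) two) :
  bhfun h (btop (flatA A1), bbot (flatA A2)) = true \/
  bhfun h (bbot (flatA A1), btop (flatA A2)) = true.
Proof.
  destruct (bhom h) as (hm & hj & hb & htop).
  destruct (bdl_laws K A1) as (m1 & j1 & mb1 & jb1).
  destruct (bdl_laws K A2) as (m2 & j2 & mb2 & jb2).
  assert (E : orb (bhfun h (btop (flatA A1), bbot (flatA A2))) (bhfun h (bbot (flatA A1), btop (flatA A2))) = true).
  { change (bjoin two (bhfun h (btop (flatA A1), bbot (flatA A2))) (bhfun h (bbot (flatA A1), btop (flatA A2))) = true).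
    rewrite <- hj, fp_join; cbn [fst snd]. rewrite j1, jb2, <- fp_top. auto. }
  apply orb_true_iff in E; auto.
Qed.

Lemma Demb1 (K : DVariety) (X : PCat) (R : RPD K X) (A1 A2 : vobj K) :
  p_embedding (fmor (D_mor _ _ R (prodV K A1 A2) A1 (pi1 K A1 A2))).
Proof.
  intros x x'. rewrite (castP_ple _ _ (D_flat_ob _ _ R (prodV K A1 A2))),
    (castP_ple _ _ (D_flat_ob _ _ R A1)). simpl. split.
  - intros H a Ha. generalize (H (a, bbot (flatA A2))). rewrite !D_flat_mor. simpl. auto.
  - intros H a. rewrite !D_flat_mor. simpl. auto.
Qed.

Lemma Demb2 (K : DVariety) (X : PCat) (R : RPD K X) (A1 A2 : vobj K) :
  p_embedding (fmor (D_mor _ _ R (prodV K A1 A2) A2 (pi2 K A1 A2))).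
Proof.
  intros x x'. rewrite (castP_ple _ _ (D_flat_ob _ _ R (prodV K A1 A2))),
    (castP_ple _ _ (D_flat_ob _ _ R A2)). simpl. split.
  - intros H a Ha. generalize (H (bbot (flatA A1), a)). rewrite !D_flat_mor. simpl. auto.
  - intros H a. rewrite !D_flat_mor. simpl. auto.
Qed.

Lemma Dimages (K : DVariety) (X : PCat) (R : RPD K X) (A1 A2 : vobj K) :
  images_dunion (fmor (D_mor _ _ R (prodV K A1 A2) A1 (pi1 K A1 A2)))
                (fmor (D_mor _ _ R (prodV K A1 A2) A2 (pi2 K A1 A2))).
Proof.
  set (P := prodV K A1 A2).
  split; [|split].
  - intro y. set (h := castP (D_flat_ob _ _ R P) y).
    destruct (split_hom K A1 A2 h) as [Ht|Ht].
    + left. destruct (split_hom1 K A1 A2 h Ht) as [x1 Hx1].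
      destruct (castP_surj _ _ (D_flat_ob _ _ R A1) x1) as [x Hx].
      exists x. apply (castP_inj _ _ (D_flat_ob _ _ R P)). apply BHom_eq. intro a.
      rewrite D_flat_mor. fold h. rewrite Hx1, Hx. reflexivity.
    + right. destruct (split_hom2 K A1 A2 h Ht) as [x1 Hx1].
      destruct (castP_surj _ _ (D_flat_ob _ _ R A2) x1) as [x Hx].
      exists x. apply (castP_inj _ _ (D_flat_ob _ _ R P)). apply BHom_eq. intro a.
      rewrite D_flat_mor. fold h. rewrite Hx1, Hx. reflexivity.
  - intros a b E. apply (f_equal (castP (D_flat_ob _ _ R P))) in E.
    apply (f_equal (fun k : BHom (flatA P) two => bhfun k (btop (flatA A1), bbot (flatA A2)))) in E.
    rewrite !D_flat_mor in E. unfold pi1, pi2 in E; cbn [ahfun fst snd] in E.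
    rewrite (proj1 (hom_tb _ _)), (proj2 (hom_tb _ _)) in E. discriminate.
  - intros a b. split; intro H; apply (castP_ple _ _ (D_flat_ob _ _ R P)) in H; simpl in H.
    + specialize (H (btop (flatA A1), bbot (flatA A2))). rewrite !D_flat_mor in H. unfold pi1, pi2 in H; cbn [ahfun fst snd] in H.
      rewrite (proj1 (hom_tb _ _)), (proj2 (hom_tb _ _)) in H. discriminate (H eq_refl).
    + specialize (H (bbot (flatA A1), btop (flatA A2))). rewrite !D_flat_mor in H. unfold pi1, pi2 in H; cbn [ahfun fst snd] in H.
      rewrite (proj1 (hom_tb _ _)), (proj2 (hom_tb _ _)) in H. discriminate (H eq_refl).
Qed.

Definition oiso (X Y : PreSpace) (t : pcar X -> pcar Y) (s : pcar Y -> pcar X) :=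
  monotone t /\ monotone s /\ (forall x, s (t x) = x) /\ (forall y, t (s y) = y).

Lemma emb_post (X Y Y' : PreSpace) (t : pcar Y -> pcar Y') s (f : pcar X -> pcar Y) :
  oiso Y Y' t s -> p_embedding f -> p_embedding (fun a => t (f a)).
Proof.
  intros (tm & sm & st & ts) Hf a b. split; intro H.
  - apply Hf. rewrite <- (st (f a)), <- (st (f b)). apply sm; auto.
  - apply tm, Hf; auto.
Qed.

Lemma emb_pre (X X' Y : PreSpace) (u : pcar X' -> pcar X) v (f : pcar X -> pcar Y) :
  oiso X' X u v -> p_embedding f -> p_embedding (fun a => f (u a)).
Proof.
  intros (um & vm & vu & uv) Hf a b. split; intro H.
  - apply Hf in H. rewrite <- (vu a), <- (vu b). apply vm; auto.
  - apply Hf, um; auto.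
Qed.

Lemma img_post (X1 X2 Y Y' : PreSpace) (t : pcar Y -> pcar Y') s (f1 : pcar X1 -> pcar Y) (f2 : pcar X2 -> pcar Y) :
  oiso Y Y' t s -> images_dunion f1 f2 -> images_dunion (fun a => t (f1 a)) (fun b => t (f2 b)).
Proof.
  intros (tm & sm & st & ts) (Hs & Hd & Hn). split; [|split].
  - intro y. destruct (Hs (s y)) as [[a Ha]|[b Hb]]; [left; exists a|right; exists b];
      [rewrite Ha|rewrite Hb]; auto.
  - intros a b E. apply (Hd a b). rewrite <- (st (f1 a)), E; auto.
  - intros a b. split; intro H; apply sm in H; rewrite !st in H; [apply (proj1 (Hn a b))|apply (proj2 (Hn a b))]; exact H.
Qed.

Lemma img_pre (X1 X2 X1' X2' Y : PreSpace) (u1 : pcar X1' -> pcar X1) v1 (u2 : pcar X2' -> pcar X2) v2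
  (f1 : pcar X1 -> pcar Y) (f2 : pcar X2 -> pcar Y) :
  oiso X1' X1 u1 v1 -> oiso X2' X2 u2 v2 ->
  images_dunion f1 f2 -> images_dunion (fun a => f1 (u1 a)) (fun b => f2 (u2 b)).
Proof.
  intros (_ & _ & _ & uv1) (_ & _ & _ & uv2) (Hs & Hd & Hn). split; [|split].
  - intro y. destruct (Hs y) as [[a Ha]|[b Hb]]; [left; exists (v1 a)|right; exists (v2 b)];
      [rewrite uv1|rewrite uv2]; auto.
  - intros a b. apply Hd.
  - intros a b. apply Hn.
Qed.

Lemma fmor_oiso (P : PCat) (a b : cob P) (t : @chom P a b) : isoC t ->
  exists s, oiso (fob a) (fob b) (fmor t) s.
Proof.
  intros [t' [t1 t2]]. exists (fmor t'). split; [apply fmor_mono|split; [apply fmor_mono|split]].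
  - intro x. rewrite <- fmor_comp, t1, fmor_id; auto.
  - intro x. rewrite <- fmor_comp, t2, fmor_id; auto.
Qed.

Lemma counit_isoC (K : DVariety) (X : PCat) (R : RPD K X) x : isoC (counit _ _ R x).
Proof. destruct (counit_iso _ _ R x) as [c [? ?]]; exists c; auto. Qed.

Lemma part1b (K : DVariety) (X : PCat) (R : RPD K X) (x1 x2 y : cob X)
  (i1 : @chom X x1 y) (i2 : @chom X x2 y) :
  is_coproduct i1 i2 ->
  pspace_iso (X := dunion (fob x1) (fob x2)) (Y := fob y)
    (fun u => match u with inl a => fmor i1 a | inr b => fmor i2 b end).
Proof.
  intro Hc.
  destruct (coprod_unique _ _ _ _ _ _ _ _ _ (cop_is_coproduct K X R x1 x2) Hc) as (t & Ht & e1 & e2).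
  destruct (fmor_oiso X _ _ t Ht) as [s Hs].
  destruct (fmor_oiso X _ _ _ (counit_isoC K X R x1)) as [s1 Hs1].
  destruct (fmor_oiso X _ _ _ (counit_isoC K X R x2)) as [s2 Hs2].
  assert (E1 : fmor i1 = fun a => fmor t (fmor (D_mor _ _ R _ _ (pi1 K (E_ob _ _ R x1) (E_ob _ _ R x2)))
                                      (fmor (counit _ _ R x1) a))).
  { apply functional_extensionality; intro a. rewrite <- e1. unfold j1. rewrite !fmor_comp. auto. }
  assert (E2 : fmor i2 = fun a => fmor t (fmor (D_mor _ _ R _ _ (pi2 K (E_ob _ _ R x1) (E_ob _ _ R x2)))
                                      (fmor (counit _ _ R x2) a))).
  { apply functional_extensionality; intro a. rewrite <- e2. unfold j2. rewrite !fmor_comp. auto. }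
  apply dunion_iso; try apply fmor_cont.
  - rewrite E1. apply (emb_post _ _ _ _ s _ Hs).
    apply (emb_pre _ _ _ _ s1 _ Hs1). apply Demb1.
  - rewrite E2. apply (emb_post _ _ _ _ s _ Hs).
    apply (emb_pre _ _ _ _ s2 _ Hs2). apply Demb2.
  - rewrite E1, E2. apply (img_post _ _ _ _ _ s _ _ Hs).
    apply (img_pre _ _ _ _ _ _ s1 _ s2 _ _ Hs1 Hs2). apply Dimages.
Qed.


Lemma iso_factor (U Y Z : PreSpace) (iota : pcar U -> pcar Y) (psi : pcar U -> pcar Z) (f : pcar Y -> pcar Z) :
  pspace_iso iota -> pspace_iso psi -> (forall u, f (iota u) = psi u) ->
  monotone f -> continuous f -> pspace_iso f.
Proof.
  intros (im & ic & i' & i'm & i'c & i1 & i2) (_ & _ & p' & p'm & p'c & p1 & p2) E fm fc.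
  split; [auto|split; [auto|]].
  exists (fun z => iota (p' z)). split; [|split; [|split]].
  - intros a b H. apply im, p'm, H.
  - intros V HV. apply (p'c (fun u => V (iota u))), ic, HV.
  - intro y. rewrite <- (i2 y), E, p1; auto.
  - intro z. rewrite E, p2; auto.
Qed.

Theorem lemma2p10 (K : DVariety) (X : PCat) (R : RPD K X) :
  ((forall x1 x2 : cob X, exists (y : cob X) (i1 : @chom X x1 y) (i2 : @chom X x2 y),
       is_coproduct i1 i2) /\
   (forall (x1 x2 y : cob X) (i1 : @chom X x1 y) (i2 : @chom X x2 y),
       is_coproduct i1 i2 ->
       pspace_iso (X := dunion (fob x1) (fob x2)) (Y := fob y)
         (fun u => match u with inl a => fmor i1 a | inr b => fmor i2 b end)))
  /\
  (forall (x1 x2 y : cob X) (phi1 : @chom X x1 y) (phi2 : @chom X x2 y),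
      p_embedding (fmor phi1) -> p_embedding (fmor phi2) ->
      images_dunion (fmor phi1) (fmor phi2) ->
      is_coproduct phi1 phi2).
Proof.
  split; [split|].
  - intros x1 x2. exists (copO K X R x1 x2), (j1 K X R x1 x2), (j2 K X R x1 x2).
    apply cop_is_coproduct.
  - exact (part1b K X R).
  - intros x1 x2 y phi1 phi2 e1 e2 Hi.
    destruct (cop_is_coproduct K X R x1 x2 y phi1 phi2) as (h & h1 & h2 & _).
    assert (Hh : isoC h).
    { apply (iso_of_flat_iso K X R).
      apply (iso_factor _ _ _ _ _ _ (part1b K X R _ _ _ _ _ (cop_is_coproduct K X R x1 x2))
               (dunion_iso _ _ _ _ _ (fmor_cont _ _ _ phi1) (fmor_cont _ _ _ phi2) e1 e2 Hi)).
      - intros [a|b]; rewrite <- fmor_comp; [rewrite h1|rewrite h2]; auto.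
      - apply fmor_mono.
      - apply fmor_cont. }
    rewrite <- h1, <- h2. apply coprod_transfer; auto. apply cop_is_coproduct.
Qed.
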